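(* Let $n\ge 2$, fix $\boldsymbol{\rho}^0\in\mathcal{P}_n$ and $\alpha>0$, and let $\mathbf{R}^1,\mathbf{R}^2,\dots$ be independent rankings, each distributed as $\mathrm{Mallows}(\boldsymbol{\rho}^0,\alpha)$ with the footrule distance. Then as $N\to\infty$, $$\mathrm{rank}\Big(\tfrac{1}{N}\sum_{j=1}^{N}R^j_1,\dots,\tfrac{1}{N}\sum_{j=1}^{N}R^j_n\Big)\to \mathrm{rank}\big(\mathbb{E}[R_1\mid\boldsymbol{\rho}^0,\alpha],\dots,\mathbb{E}[R_n\mid\boldsymbol{\rho}^0,\alpha]\big)=\boldsymbol{\rho}^0,$$ where $\mathbf{R}=(R_1,\dots,R_n)\sim\mathrm{Mallows}(\boldsymbol{\rho}^0,\alpha)$.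
   Context: $\mathcal{P}_n$ denotes the set of permutations of $\{1,\dots,n\}$; a ranking $\mathbf{r}\in\mathcal{P}_n$ assigns rank $r_i$ to item $i$. The footrule distance is $d(\mathbf{r},\boldsymbol{\rho})=\sum_{i=1}^n|r_i-\rho_i|$. The Mallows distribution $\mathrm{Mallows}(\boldsymbol{\rho}^0,\alpha)$ on $\mathcal{P}_n$ has probability mass function $P(\mathbf{R}=\mathbf{r}\mid\boldsymbol{\rho}^0,\alpha)=\frac{1}{Z_n(\alpha)}\exp\{-\frac{\alpha}{n}d(\mathbf{r},\boldsymbol{\rho}^0)\}$ with normalizing constant $Z_n(\alpha)$. The rank operator on a real vector $(x_1,\dots,x_n)$ is $\mathrm{rank}(x_1,\dots,x_n)=(r_1,\dots,r_n)$ with $r_i=\sum_{j=1}^n\delta(x_i-x_j)$, where $\delta(x)=1$ if $x\ge 0$ and $\delta(x)=0$ if $x<0$. *)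

(* Defs.v *)
From HB Require Import structures.
From mathcomp Require Import all_boot all_order all_algebra all_fingroup.
From mathcomp Require Import all_classical all_reals all_analysis.
Set Implicit Arguments. Unset Strict Implicit. Unset Printing Implicit Defensive.
Import Order.TTheory GRing.Theory Num.Theory.
Local Open Scope ring_scope.
Local Open Scope classical_set_scope.

(* A ranking of n items is a permutation r : 'S_n; item i (0-based index)
   gets rank rk r i = (r i) + 1 in {1,...,n}. *)
Definition rk (n : nat) (r : 'S_n) (i : 'I_n) : nat := (r i).+1.

Definition footrule (n : nat) (r rho : 'S_n) : nat :=
  (\sum_(i < n) `|(rk r i)%:Z - (rk rho i)%:Z|%N)%N.

Section Mallows.
Variable R : realType.

Definition mallowsZ (n : nat) (rho0 : 'S_n) (alpha : R) : R :=
  \sum_(r : 'S_n) expR (- (alpha / n%:R) * (footrule r rho0)%:R).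

Definition mallows (n : nat) (rho0 : 'S_n) (alpha : R) (r : 'S_n) : R :=
  expR (- (alpha / n%:R) * (footrule r rho0)%:R) / mallowsZ rho0 alpha.

Definition mallows_mean (n : nat) (rho0 : 'S_n) (alpha : R) (i : 'I_n) : R :=
  \sum_(r : 'S_n) mallows rho0 alpha r * (rk r i)%:R.

Definition rankv (n : nat) (x : 'I_n -> R) (i : 'I_n) : nat :=
  (\sum_(j < n) nat_of_bool (0 <= x i - x j)%R)%N.

(* (1/N) sum_{j=1}^N R^j_i, where the sequence R^1, R^2, ... is indexed
   from 0: R^{j+1} = Rs j. *)
Definition avg_rank (n : nat) (T : Type) (Rs : nat -> T -> 'S_n)
  (N : nat) (w : T) (i : 'I_n) : R :=
  N%:R^-1 * \sum_(j < N) (rk (Rs j w) i)%:R.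
End Mallows.

(* Rs is a sequence of independent random rankings, each distributed as
   Mallows(rho0, alpha): every event {Rs j = r} is measurable, and for every
   finite set J of indices (a duplicate-free list) and every choice of
   rankings r_j, P(forall j in J, Rs j = r_j) = prod_{j in J} mallows(r_j). *)
Definition iid_mallows (R : realType) (d : measure_display)
  (T : measurableType d) (P : probability T R) (n : nat)
  (Rs : nat -> T -> 'S_n) (rho0 : 'S_n) (alpha : R) : Prop :=
  (forall (j : nat) (r : 'S_n), measurable [set w : T | Rs j w = r]) /\
  (forall (J : seq nat) (r : nat -> 'S_n), uniq J ->
     P [set w : T | forall j, j \in J -> Rs j w = r j] =
     ((\prod_(j <- J) mallows rho0 alpha (r j))%:E)%E).

(* Main.v *)
Require Import Defs.
From HB Require Import structures.
From mathcomp Require Import all_boot all_order all_algebra all_fingroup.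
From mathcomp Require Import all_classical all_reals all_analysis.
From mathcomp Require Import zify ring lra.
Import Order.TTheory GRing.Theory Num.Theory.
Local Open Scope ring_scope.
Local Open Scope classical_set_scope.

Section P1.
Variables (R : realType) (n : nat) (rho0 : 'S_n) (alpha : R).
Hypotheses (n2 : (2 <= n)%N) (a0 : 0 < alpha).

Lemma c_gt0 : 0 < alpha / n%:R.
Proof. by rewrite divr_gt0 // ltr0n; lia. Qed.

Lemma mallowsZ_gt0 : 0 < mallowsZ rho0 alpha.
Proof.
rewrite /mallowsZ (bigD1 1%g) //=.
have h1 := expR_gt0 (- (alpha / n%:R) * (footrule 1%g rho0)%:R).
have h2 : 0 <= \sum_(i | i != 1%g) expR (- (alpha / n%:R) * (footrule i rho0)%:R).
  by apply: sumr_ge0 => i _; exact: expR_ge0.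
lra.
Qed.

Lemma mallows_gt0 r : 0 < mallows rho0 alpha r.
Proof. by rewrite /mallows divr_gt0 ?expR_gt0 ?mallowsZ_gt0. Qed.

Lemma mallows_sum1 : \sum_r mallows rho0 alpha r = 1.
Proof. by rewrite /mallows -mulr_suml mulfV // gt_eqF // mallowsZ_gt0. Qed.

Lemma mallows_le r s : (footrule r rho0 <= footrule s rho0)%N ->
  mallows rho0 alpha s <= mallows rho0 alpha r.
Proof.
move=> h; rewrite /mallows ler_pM2r ?invr_gt0 ?mallowsZ_gt0 // ler_expR.
by rewrite !mulNr lerN2 ler_pM2l ?c_gt0 // ler_nat.
Qed.

Lemma mallows_lt r s : (footrule r rho0 < footrule s rho0)%N ->
  mallows rho0 alpha s < mallows rho0 alpha r.
Proof.
move=> h; rewrite /mallows ltr_pM2r ?invr_gt0 ?mallowsZ_gt0 // ltr_expR.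
by rewrite !mulNr ltrN2 ltr_pM2l ?c_gt0 // ltr_nat.
Qed.

Lemma footrule_swap (i j : 'I_n) (r : 'S_n) : (rho0 i < rho0 j)%N ->
  (r i < r j)%N -> (footrule r rho0 <= footrule (tperm i j * r)%g rho0)%N.
Proof.
move=> hr h.
have ij : i != j by apply/eqP => e; move: hr; rewrite e ltnn.
have sp : forall s : 'S_n, footrule s rho0 = (`|(rk s i)%:Z - (rk rho0 i)%:Z|%N +
   (`|(rk s j)%:Z - (rk rho0 j)%:Z|%N +
   \sum_(k | (k != i) && (k != j)) `|(rk s k)%:Z - (rk rho0 k)%:Z|%N))%N.
  by move=> s; rewrite /footrule (bigD1 i) // (bigD1 j) 1?eq_sym //=.
rewrite !sp.
have er : (\sum_(k | (k != i) && (k != j)) `|(rk r k)%:Z - (rk rho0 k)%:Z|%N =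
   \sum_(k | (k != i) && (k != j)) `|(rk (tperm i j * r)%g k)%:Z - (rk rho0 k)%:Z|%N)%N.
  by apply: eq_bigr => k /andP[ki kj]; rewrite /rk permM tpermD // eq_sym.
rewrite er.
rewrite /rk !permM tpermL tpermR.
move: (r i) (r j) (rho0 i) (rho0 j) h hr => a b c d; rewrite /=. 
move=> *; lia.
Qed.

Lemma footrule_id : footrule rho0 rho0 = 0%N.
Proof. by rewrite /footrule big1 // => k _; rewrite subrr. Qed.

Lemma footrule_swap_pos (i j : 'I_n) : (rho0 i < rho0 j)%N ->
  (0 < footrule (tperm i j * rho0)%g rho0)%N.
Proof.
move=> hr.
have ij : i != j by apply/eqP => e; move: hr; rewrite e ltnn.
rewrite /footrule (bigD1 i) //= /rk permM tpermL.
move: (rho0 i) (rho0 j) hr => a b /= h; lia.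
Qed.

Definition Dm (i j : 'I_n) : R :=
  \sum_r mallows rho0 alpha r * ((rk r j)%:R - (rk r i)%:R).

Lemma mean_diff i j : mallows_mean rho0 alpha j - mallows_mean rho0 alpha i = Dm i j.
Proof. by rewrite /mallows_mean /Dm -sumrB; apply: eq_bigr => r _; rewrite mulrBr. Qed.

Lemma Dm_pos (i j : 'I_n) : (rho0 i < rho0 j)%N -> 0 < Dm i j.
Proof.
move=> hr.
have ij : i != j by apply/eqP => e; move: hr; rewrite e ltnn.
set s := tperm i j.
have e1 : Dm i j = \sum_r mallows rho0 alpha (s * r)%g * ((rk r i)%:R - (rk r j)%:R).
  rewrite /Dm (reindex_inj (@mulgI _ s)) /=; apply: eq_bigr => r _.
  by rewrite /rk !permM tpermL tpermR.
have e2 : Dm i j + Dm i j = \sum_r (mallows rho0 alpha r - mallows rho0 alpha (s * r)%g)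
     * ((rk r j)%:R - (rk r i)%:R).
  rewrite {2}e1 /Dm -big_split /=; apply: eq_bigr => r _; rewrite mulrBl; lra.
have pos : 0 < Dm i j + Dm i j.
  rewrite e2 (bigD1 rho0) //=.
  have h1 : 0 < (mallows rho0 alpha rho0 - mallows rho0 alpha (s * rho0)%g) *
     ((rk rho0 j)%:R - (rk rho0 i)%:R).
    apply: mulr_gt0; rewrite subr_gt0.
      by apply: mallows_lt; rewrite footrule_id footrule_swap_pos.
    by rewrite /rk ltr_nat ltnS.
  have h2 : 0 <= \sum_(r | r != rho0) (mallows rho0 alpha r - mallows rho0 alpha (s * r)%g)
     * ((rk r j)%:R - (rk r i)%:R).
    apply: sumr_ge0 => r _; rewrite /rk.
    case: (ltngtP (r i) (r j)) => h.
    - apply: mulr_ge0; rewrite subr_ge0.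
        by apply: mallows_le; apply: footrule_swap.
      by rewrite ler_nat; lia.
    - apply: mulr_le0; rewrite subr_le0.
        have := @footrule_swap i j (s * r)%g hr.
        rewrite !permM /s tpermL tpermR mulgA tperm2 mul1g => /(_ h) hh.
        exact: mallows_le.
      by rewrite ler_nat; lia.
    - by rewrite h subrr mulr0.
  lra.
lra.
Qed.

Lemma sum_le_count (m : nat) : (m < n)%N ->
  (\sum_(k < n) nat_of_bool (k <= m)%N)%N = m.+1.
Proof.
move=> mn; rewrite -(big_mkord xpredT (fun k => nat_of_bool (k <= m)%N)).
rewrite (big_cat_nat (n := m.+1)) //=.
rewrite (eq_big_nat _ _ (F2 := fun _ => 1%N)); last by move=> k /andP[_ h]; rewrite -ltnS h.
rewrite sum_nat_const_nat muln1 subn0 big_nat_cond big1 ?addn0 //.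
by move=> k /andP[/andP[h _] _]; rewrite leqNgt h.
Qed.

Lemma rank_lemma (x : 'I_n -> R) :
  (forall i j, (rho0 i < rho0 j)%N -> x i < x j) -> forall i, rankv x i = rk rho0 i.
Proof.
move=> hx i; rewrite /rankv.
rewrite (eq_bigr (fun j => nat_of_bool (rho0 j <= rho0 i)%N)); last first.
  move=> j _; rewrite subr_ge0; congr nat_of_bool.
  case: (ltngtP (rho0 j) (rho0 i)) => h.
  - by rewrite ltW // hx.
  - by apply/negbTE; rewrite -ltNge hx.
  - have e : rho0 j = rho0 i by apply: val_inj.
    by rewrite (perm_inj e) lexx.
rewrite -(@reindex_inj _ _ _ _ (fun k => rho0 k) xpredT (fun k : 'I_n => nat_of_bool (k <= rho0 i)%N) (@perm_inj _ rho0)).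
by rewrite sum_le_count.
Qed.

Lemma part1 : forall i, rankv (mallows_mean rho0 alpha) i = rk rho0 i.
Proof.
apply: rank_lemma => i j h; rewrite -subr_gt0 mean_diff; exact: Dm_pos.
Qed.


Definition xr (i j : 'I_n) (r : 'S_n) : R := (rk r j)%:R - (rk r i)%:R.
Definition tt (i j : 'I_n) : R := Dm i j / (4 * n%:R ^+ 2).
Definition qf (i j : 'I_n) : R :=
  \sum_r mallows rho0 alpha r * expR (- tt i j * xr i j r).
Definition qb (i j : 'I_n) : R := 1 - tt i j * Dm i j / 2.

Lemma xr_bound i j r : - n%:R <= xr i j r <= n%:R.
Proof.
rewrite /xr /rk.
have h1 : ((r j).+1%:R : R) <= n%:R by rewrite ler_nat.
have h2 : ((r i).+1%:R : R) <= n%:R by rewrite ler_nat.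
have h3 : (0 : R) <= (r j).+1%:R by [].
have h4 : (0 : R) <= (r i).+1%:R by [].
apply/andP; split; lra.
Qed.

Lemma exp_ub (u : R) : u <= 1/2 -> expR u <= 1 + u + 2 * u ^+ 2.
Proof.
move=> hu.
have h := expR_ge1Dx (- u).
have e : expR u = (expR (- u))^-1 by rewrite expRN invrK.
have p : 0 < 1 - u by lra.
rewrite e; apply: (@le_trans _ _ (1 - u)^-1).
  rewrite lef_pV2 ?posrE ?expR_gt0 //; lra.
rewrite -[(1 - u)^-1]mul1r ler_pdivrMr //; nra.
Qed.

Lemma Dm_le i j : Dm i j <= n%:R.
Proof.
apply: (@le_trans _ _ (\sum_r mallows rho0 alpha r * n%:R)); last first.
  by rewrite -mulr_suml mallows_sum1 mul1r.
rewrite /Dm; apply: ler_sum => r _.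
rewrite ler_wpM2l ?(ltW (mallows_gt0 _)) //.
by have /andP[_ h] := xr_bound i j r; exact: h.
Qed.

Lemma qf_le i j : (rho0 i < rho0 j)%N -> qf i j <= qb i j.
Proof.
move=> hr.
have D0 := Dm_pos i j hr.
have DK := Dm_le i j.
set K : R := n%:R.
have K2 : 2 <= K by rewrite /K (ler_nat R 2 n).
set t := tt i j.
have ht : t * (4 * K ^+ 2) = Dm i j.
  by rewrite /t /tt divfK // mulf_neq0 // ?expf_neq0 //; lra.
have t0 : 0 < t by rewrite /t /tt divr_gt0 // mulr_gt0 // exprn_gt0 //; lra.
have tK : t * K <= 1/4 by nra.
apply: (@le_trans _ _ (\sum_r mallows rho0 alpha r *
   (1 + (- t * xr i j r) + 2 * (- t * xr i j r) ^+ 2))).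
  apply: ler_sum => r _; rewrite ler_wpM2l ?(ltW (mallows_gt0 _)) //.
  apply: exp_ub; have /andP[h1 h2] := xr_bound i j r; rewrite -/K in h1 h2.
  have : 0 <= t * (xr i j r + K) by apply: mulr_ge0; lra.
  rewrite -/t; lra.
apply: (@le_trans _ _ (\sum_r mallows rho0 alpha r *
   (1 - t * xr i j r + 2 * t ^+ 2 * K ^+ 2))).
  apply: ler_sum => r _; rewrite ler_wpM2l ?(ltW (mallows_gt0 _)) //.
  have /andP[h1 h2] := xr_bound i j r; rewrite -/K in h1 h2.
  have : xr i j r ^+ 2 <= K ^+ 2 by nra.
  have : 0 <= t ^+ 2 by nra.
  nra.
rewrite (eq_bigr (fun r => mallows rho0 alpha r * (1 + 2 * t ^+ 2 * K ^+ 2)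
   - t * (mallows rho0 alpha r * xr i j r))); last by move=> r _; ring.
rewrite sumrB -mulr_suml mallows_sum1 -mulr_sumr.
rewrite /qb -/t; rewrite /Dm /xr.
have e : 2 * t ^+ 2 * K ^+ 2 = t * Dm i j / 2 by rewrite -ht; field.
rewrite /Dm in e; rewrite e; lra.
Qed.

Lemma qb_lt1 i j : (rho0 i < rho0 j)%N -> qb i j < 1.
Proof.
move=> hr; have D0 := Dm_pos i j hr.
have t0 : 0 < tt i j by rewrite /tt divr_gt0 // mulr_gt0 // exprn_gt0 // ltr0n; lia.
rewrite /qb; nra.
Qed.

Lemma qf_ge0 i j : 0 <= qf i j.
Proof. by apply: sumr_ge0 => r _; rewrite mulr_ge0 ?expR_ge0 ?(ltW (mallows_gt0 _)). Qed.


Lemma geo_bound (q : R) (m : nat) : 0 <= q < 1 -> \sum_(N < m) q ^+ N <= (1 - q)^-1.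
Proof.
move=> /andP[q0 q1].
have e : (1 - q) * \sum_(N < m) q ^+ N = 1 - q ^+ m.
  elim: m => [|m IH]; first by rewrite big_ord0 mulr0 expr0 subrr.
  by rewrite big_ord_recr /= mulrDr IH exprS; ring.
have p : 0 < 1 - q by lra.
have -> : \sum_(N < m) q ^+ N = (1 - q)^-1 * (1 - q ^+ m) by rewrite -e mulKf // gt_eqF.
rewrite -[X in _ <= X]mulr1 ler_wpM2l ?invr_ge0 ?(ltW p) //.
have : 0 <= q ^+ m by exact: exprn_ge0.
lra.
Qed.

Variables (d : measure_display) (T : measurableType d) (P : probability T R)
  (Rs : nat -> T -> 'S_n).
Hypothesis iid : iid_mallows P Rs rho0 alpha.

Definition rF {N : nat} (F : {ffun 'I_N -> 'S_n}) (j : nat) : 'S_n :=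
  if (insub j : option 'I_N) is Some k then F k else 1%g.

Definition cyl N (F : {ffun 'I_N -> 'S_n}) : set T :=
  [set w | forall j, j \in iota 0 N -> Rs j w = rF F j].

Lemma rFE N (F : {ffun 'I_N -> 'S_n}) (k : 'I_N) : rF F k = F k.
Proof. by rewrite /rF valK. Qed.

Lemma cylP N F w : cyl N F w <-> forall k : 'I_N, Rs k w = F k.
Proof.
split.
  move=> h k; rewrite -rFE; apply: h; rewrite mem_iota /=; exact: ltn_ord.
move=> h j; rewrite mem_iota add0n /= => jN.
by have := h (Ordinal jN); rewrite -rFE.
Qed.

Lemma P_cyl N F : P (cyl N F) = (\prod_(k < N) mallows rho0 alpha (F k))%:E.
Proof.
rewrite /cyl (iid.2 (iota 0 N) (rF F) (iota_uniq 0 N)).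
congr (_%:E).
rewrite -{1}(subn0 N) -/(index_iota 0 N) big_mkord.
by apply: eq_bigr => k _; rewrite rFE.
Qed.

Lemma cyl_meas N F : measurable (cyl N F).
Proof.
have -> : cyl N F = \bigcap_j (if (j < N)%N then [set w | Rs j w = rF F j] else setT).
  apply/seteqP; split => w /=.
    move=> h j _; case: ifP => // jN; by apply: h; rewrite mem_iota /= add0n jN.
  move=> h j; rewrite mem_iota add0n /= => jN.
  by have := h j I; rewrite jN.
apply: bigcapT_measurable => j; case: ifP => _; last exact: measurableT.
exact: iid.1.
Qed.

Definition Sx (i j : 'I_n) {N} (F : {ffun 'I_N -> 'S_n}) : R := \sum_(k < N) xr i j (F k).

Definition badF {N} (F : {ffun 'I_N -> 'S_n}) : bool :=
  [exists p : 'I_n * 'I_n, (rho0 p.1 < rho0 p.2)%N && (Sx p.1 p.2 F <= 0)].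

Definition Fw N (w : T) : {ffun 'I_N -> 'S_n} := [ffun k : 'I_N => Rs k w].

Definition badset N : set T := [set w | badF (Fw N w)].

Lemma badset_eq N : badset N = \big[setU/set0]_(F | badF F) cyl N F.
Proof.
rewrite -bigcup_seq_cond; apply/seteqP; split => w /=.
  move=> hb; exists (Fw N w); first by rewrite /= mem_index_enum.
  by apply/cylP => k; rewrite ffunE.
move=> [F /andP[_ hF] /cylP hc].
suff e : Fw N w = F by rewrite /badset /= e.
by apply/ffunP => k; rewrite ffunE hc.
Qed.

Lemma badset_meas N : measurable (badset N).
Proof. rewrite badset_eq; apply: bigsetU_measurable => F _; exact: cyl_meas. Qed.

Lemma fin_subadd (I : Type) (s : seq I) (Pr : pred I) (A : I -> set T) :
  (forall i, measurable (A i)) ->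
  (P (\big[setU/set0]_(i <- s | Pr i) A i) <= \sum_(i <- s | Pr i) P (A i))%E.
Proof.
move=> mA; elim: s => [|a s IH]; first by rewrite !big_nil measure0.
rewrite !big_cons; case: ifP => // Pa.
apply: le_trans (measureU2 _ _ _) _; first exact: mA.
  by apply: bigsetU_measurable => i _; exact: mA.
exact: leeD2l.
Qed.

Definition pr (p : 'I_n * 'I_n) : bool := (rho0 p.1 < rho0 p.2)%N.

Lemma P_badset N : (P (badset N) <= (\sum_(p | pr p) qb p.1 p.2 ^+ N)%:E)%E.
Proof.
rewrite badset_eq; apply: le_trans (@fin_subadd _ _ _ (cyl N) (@cyl_meas N)) _.
under eq_bigr do rewrite P_cyl.
rewrite sumEFin lee_fin.
set a := fun F : {ffun 'I_N -> 'S_n} => \prod_(k < N) mallows rho0 alpha (F k).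
set b := fun F : {ffun 'I_N -> 'S_n} =>
  \sum_(p | pr p) \prod_(k < N) expR (- tt p.1 p.2 * xr p.1 p.2 (F k)).
have a0' : forall F, 0 <= a F.
  by move=> F; apply: prodr_ge0 => k _; exact: ltW (mallows_gt0 _).
have b0 : forall F, 0 <= b F.
  by move=> F; apply: sumr_ge0 => p _; apply: prodr_ge0 => k _; exact: expR_ge0.
apply: (@le_trans _ _ (\sum_F a F * b F)).
  rewrite [X in X <= _]big_mkcond /=; apply: ler_sum => F _.
  case: ifP => hb; last by rewrite mulr_ge0.
  apply: ler_peMr; first exact: a0'.
  case/existsP: hb => p /andP[hp hS].
  rewrite /b /= (bigD1 p) //=.
  have h1 : 1 <= \prod_(k < N) expR (- tt p.1 p.2 * xr p.1 p.2 (F k)).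
    rewrite -expR_sum -mulr_sumr.
    have t0 : 0 < tt p.1 p.2.
      by rewrite /tt divr_gt0 ?Dm_pos // mulr_gt0 // exprn_gt0 // ltr0n; lia.
    have : 0 <= - tt p.1 p.2 * Sx p.1 p.2 F by rewrite mulNr oppr_ge0 mulr_ge0_le0 // ltW.
    rewrite /Sx => h; have := expR_ge1Dx (- tt p.1 p.2 * (\sum_(k < N) xr p.1 p.2 (F k))).
    lra.
  have h2 : 0 <= \sum_(p0 | pr p0 && (p0 != p))
     \prod_(k < N) expR (- tt p0.1 p0.2 * xr p0.1 p0.2 (F k)).
    by apply: sumr_ge0 => q _; apply: prodr_ge0 => k _; exact: expR_ge0.
  lra.
rewrite /b; under eq_bigr do rewrite mulr_sumr.
rewrite exchange_big /=; apply: ler_sum => p hp.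
have e : \sum_(F : {ffun 'I_N -> 'S_n}) a F * \prod_(k < N) expR (- tt p.1 p.2 * xr p.1 p.2 (F k))
  = qf p.1 p.2 ^+ N.
  have -> : forall x : R, x ^+ N = \prod_(k < N) x by move=> x; rewrite prodr_const card_ord.
  rewrite /qf bigA_distr_bigA /=.
  by apply: eq_bigr => F _; rewrite /a -big_split.
rewrite e; apply: lerXn2r; rewrite ?nnegrE ?qf_ge0 //.
  exact: le_trans (qf_ge0 _ _) (qf_le _ _ hp).
exact: qf_le.
Qed.


Lemma qb_ge0 p : pr p -> 0 <= qb p.1 p.2.
Proof. by move=> hp; exact: le_trans (qf_ge0 _ _) (qf_le _ _ hp). Qed.

Lemma series_fin : (\sum_(N <oo) P (badset N) < +oo)%E.
Proof.
set C := \sum_(p | pr p) (1 - qb p.1 p.2)^-1.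
apply: (@le_lt_trans _ _ (C%:E)); last exact: ltry.
apply: (@le_trans _ _ (\sum_(N <oo) ((\sum_(p | pr p) qb p.1 p.2 ^+ N)%:E))%E).
  by apply: lee_nneseries => // N _; exact: P_badset.
apply: lime_le.
  apply: is_cvg_nneseries => N _ _; rewrite lee_fin.
  by apply: sumr_ge0 => p hp; rewrite exprn_ge0 // qb_ge0.
apply: nearW => m; rewrite sumEFin lee_fin big_mkord exchange_big /=.
apply: ler_sum => p hp; apply: geo_bound.
by rewrite qb_ge0 // qb_lt1.
Qed.

Lemma part2 : {ae P, forall w : T, \forall N \near \oo,
     forall i : 'I_n, rankv (avg_rank R Rs N w) i = rankv (mallows_mean rho0 alpha) i}.
Proof.
exists (lim_sup_set badset); split.
- rewrite /lim_sup_set; apply: bigcap_measurable => // k _.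
  by apply: bigcup_measurable => j _; exact: badset_meas.
- apply: lim_sup_set_cvg0; [exact: badset_meas | exact: series_fin].
move=> w /= nQ M _; apply: contrapT => hM; apply: nQ.
apply: filterS (nbhs_infty_ge M.+1) => N hN.
move=> i; rewrite part1; move: i; apply: rank_lemma => i j h.
have nb : ~ badset N w by move=> hb; apply: hM; exists N => //=; exact: ltnW.
have hS : 0 < Sx i j (Fw N w).
  rewrite ltNge; apply/negP => hle; apply: nb; apply/existsP; exists (i, j).
  by rewrite /= h hle.
rewrite -subr_gt0.
have -> : avg_rank R Rs N w j - avg_rank R Rs N w i = N%:R^-1 * Sx i j (Fw N w).
  rewrite /avg_rank -mulrBr -sumrB /Sx; congr (_ * _); apply: eq_bigr => k _.
  by rewrite ffunE /xr.
by rewrite mulr_gt0 // invr_gt0 ltr0n; lia.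
Qed.

End P1.

Theorem theorem2 (R : realType) (d : measure_display) (T : measurableType d)
  (P : probability T R) (n : nat) (rho0 : 'S_n) (alpha : R)
  (Rs : nat -> T -> 'S_n) :
  (2 <= n)%N -> 0 < alpha -> iid_mallows P Rs rho0 alpha ->
  (forall i : 'I_n, rankv (mallows_mean rho0 alpha) i = rk rho0 i) /\
  {ae P, forall w : T, \forall N \near \oo,
     forall i : 'I_n, rankv (avg_rank R Rs N w) i = rankv (mallows_mean rho0 alpha) i}.
Proof.
move=> n2 a0 iid; split; first exact: part1.
exact: part2.
Qed.
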